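(* Let $q>r\geq 1$ be integers and $\alpha$ a real number. Suppose that for all positive integers $N$ we have $f_{q,r}(N)\geq N^{\alpha-\varepsilon(N)}$, for some function $\varepsilon$ with $\lim_{N\to\infty}\varepsilon(N)=0$. Then $f_{q,r}(N)\geq N^{\alpha}$ for all positive integers $N$.
   Context: For a $q$-edge-colored complete graph $K$ on vertex set $[N]$ with its natural order, $f_{q,r}(K)$ is the maximum number of vertices of a monotone path (vertices strictly increasing in traversal order) in $K$ whose edges use at most $r$ colors; $f_{q,r}(N)$ is the minimum of $f_{q,r}(K)$ over all such $q$-edge-colored $K$ on $N$ vertices. *)

(* Defs.v *)
From mathcomp Require Import all_boot.
Set Implicit Arguments. Unset Strict Implicit. Unset Printing Implicit Defensive.

(* A q-edge-coloring of the complete graph K_N on vertex set 'I_N (= [N],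
   with its natural order).  The color of the edge {x,y} with x < y is
   c (x, y); values on pairs with x >= y are irrelevant (never used). *)
Definition coloring (q N : nat) := {ffun 'I_N * 'I_N -> 'I_q}.

Definition path_colors q N (c : coloring q N) (s : seq 'I_N) : seq 'I_q :=
  undup [seq c (e.1, e.2) | e <- zip s (behead s)].

(* A monotone path (vertices strictly increasing in traversal order)
   visiting exactly the vertices of S; it is the increasing enumeration of S. *)
Definition mono_path N (S : {set 'I_N}) : seq 'I_N := enum S.

Definition fK (q r N : nat) (c : coloring q N) : nat :=
  \max_(S : {set 'I_N} | size (path_colors c (mono_path S)) <= r) #|S|.

(* f_{q,r}(N): minimum of f_{q,r}(K) over all q-edge-colorings K of K_N.
   (The identity N is harmless since f_{q,r}(K) <= N.) *)
Definition fqr (q r N : nat) : nat :=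
  \big[minn/N]_(c : coloring q N) fK r c.

(* Main.v *)
Require Import Defs.
From mathcomp Require Import all_boot zify.
From Stdlib Require Import Reals Lra.
Set Implicit Arguments. Unset Strict Implicit.


Section Consec.
Variable n : nat.
Definition ltO : rel 'I_n := relpre val ltn.
Lemma ltO_trans : transitive ltO.
Proof. move=> y x z; rewrite /ltO /=; exact: ltn_trans. Qed.

Lemma enum_sorted (S : {set 'I_n}) : sorted ltO (enum S).
Proof.
rewrite /ltO -sorted_map.
rewrite -[enum _](eq_filter (mem_enum _)).
rewrite -(eq_filter (mem_map val_inj _)) -filter_map.
by rewrite (sorted_filter ltn_trans) // unlock val_ord_enum iota_ltn_sorted.
Qed.

Lemma consec1 (s : seq 'I_n) x y : sorted ltO s -> (x, y) \in zip s (behead s) ->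
  [/\ x \in s, y \in s, x < y & forall z, z \in s -> ~~ ((x < z) && (z < y))].
Proof.
elim: s => [|a t IH] //.
case: t IH => [|b t'] IH // srt.
have alla := order_path_min ltO_trans srt.
have [ab srt'] := andP srt.
have allb := order_path_min ltO_trans srt'.
rewrite /= in_cons => /orP [/eqP [-> ->]|].
  split => //; rewrite ?inE ?eqxx ?orbT //.
  move=> z; rewrite !inE => /orP [/eqP ->|/orP [/eqP ->|zt]]; first by rewrite ltnn.
    by rewrite ltnn andbF.
  by move/allP: allb => /(_ z zt); rewrite /ltO /= => bz; apply/negP => /andP [_ /(ltn_trans bz)]; rewrite ltnn.
move=> /(IH srt') [xt yt xy H]; split => //.
- by rewrite inE xt orbT.
- by rewrite inE yt orbT.
move=> z; rewrite inE => /orP [/eqP ->|]; last exact: H.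
by move/allP: alla => /(_ x xt); rewrite /ltO /= => ax; apply/negP => /andP [/(ltn_trans ax)]; rewrite ltnn.
Qed.

Lemma consec2 (s : seq 'I_n) x y : sorted ltO s -> x \in s -> y \in s -> x < y ->
  (forall z, z \in s -> ~~ ((x < z) && (z < y))) -> (x, y) \in zip s (behead s).
Proof.
elim: s => [|a t IH] //.
case: t IH => [|b t'] IH srt.
  by rewrite !inE => /eqP -> /eqP ->; rewrite ltnn.
have alla := order_path_min ltO_trans srt.
have [ab srt'] := andP srt.
have allb := order_path_min ltO_trans srt'.
move=> xs ys xy H /=.
rewrite in_cons.
have Ht : forall z, z \in b :: t' -> ~~ ((x < z) && (z < y)).
  by move=> z zt; apply: H; rewrite inE zt orbT.
case: (eqVneq x a) => [xa|xa].
  subst x.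
  move: ys; rewrite inE => /orP [/eqP ya|yt]; first by subst y; rewrite ltnn in xy.
  move: yt; rewrite inE => /orP [/eqP yb|yt']; first by subst y; rewrite eqxx.
  have := H b; rewrite !inE eqxx orbT /= => /(_ isT).
  by move/allP: allb => /(_ y yt'); rewrite /ltO /= => ->; move: ab; rewrite /ltO /= => ->.
apply/orP; right.
move: xs; rewrite inE (negbTE xa) /= => xt.
move/allP: alla => alla.
have ax := alla x xt; rewrite /ltO /= in ax.
move: ys; rewrite inE => /orP [/eqP ya|yt].
  by subst y; have := ltn_trans ax xy; rewrite ltnn.
exact: IH.
Qed.
End Consec.

Lemma colors_mem q N (c : coloring q N) s col : col \in path_colors c s ->
  exists x y, (x,y) \in zip s (behead s) /\ c (x,y) = col.
Proof.
rewrite /path_colors mem_undup => /mapP [[x y] H ->]; by exists x, y.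
Qed.

Lemma mem_colors q N (c : coloring q N) s x y : (x,y) \in zip s (behead s) ->
  c (x,y) \in path_colors c s.
Proof.
move=> H; rewrite /path_colors mem_undup; apply/mapP; by exists (x,y).
Qed.

Lemma fK_ge q r N (c : coloring q N) (S : {set 'I_N}) : size (path_colors c (enum S)) <= r -> #|S| <= fK r c.
Proof. move=> H; rewrite /fK; exact: (@leq_bigmax_cond _ (fun S : {set 'I_N} => size (path_colors c (enum S)) <= r) (fun S => #|S|) S H). Qed.

Lemma fK_le q r N (c : coloring q N) K :
  (forall S : {set 'I_N}, size (path_colors c (enum S)) <= r -> #|S| <= K) -> fK r c <= K.
Proof. move=> H; rewrite /fK; apply/bigmax_leqP => S; exact: H. Qed.

Section Prod.
Variables (q r n m : nat).
Notation NM := (n.+1 * m.+1).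
Definition hi (x : 'I_NM) : 'I_n.+1 := inord (x %/ m.+1).
Definition lo (x : 'I_NM) : 'I_m.+1 := inord (x %% m.+1).
Lemma hiE (x : 'I_NM) : val (hi x) = x %/ m.+1.
Proof. rewrite /hi /= inordK // ltn_divLR //; exact: ltn_ord. Qed.
Lemma loE (x : 'I_NM) : val (lo x) = x %% m.+1.
Proof. by rewrite /lo /= inordK // ltn_mod. Qed.
Lemma hilo_inj (x y : 'I_NM) : hi x = hi y -> lo x = lo y -> x = y.
Proof.
move=> /(congr1 val) h /(congr1 val) l; rewrite !hiE in h; rewrite !loE in l.
by apply: val_inj; rewrite /= (divn_eq x m.+1) (divn_eq y m.+1) h l.
Qed.
Lemma hi_mono (x y : 'I_NM) : x <= y -> hi x <= hi y.
Proof. by rewrite !hiE => /leq_div2r. Qed.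
Lemma hi_lt (x y : 'I_NM) : hi x < hi y -> x < y.
Proof. by rewrite ltnNge => /negP H; rewrite ltnNge; apply/negP => /hi_mono. Qed.
Lemma hi_eq (x y : 'I_NM) : hi x = hi y -> (x < y) = (lo x < lo y).
Proof.
move=> /(congr1 val); rewrite !hiE !loE => h.
by rewrite {1}(divn_eq x m.+1) {1}(divn_eq y m.+1) h ltn_add2l.
Qed.

Definition prodc (c1 : coloring q n.+1) (c2 : coloring q m.+1) : coloring q NM :=
  [ffun p => if hi p.1 != hi p.2 then c1 (hi p.1, hi p.2) else c2 (lo p.1, lo p.2)].

Lemma fK_prod c1 c2 : fK r (prodc c1 c2) <= fK r c1 * fK r c2.
Proof.
apply: fK_le => S HS.
set A := hi @: S.
pose Sa a := [set x in S | hi x == a].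
have HA : size (path_colors c1 (enum A)) <= r.
  apply: leq_trans HS; apply: uniq_leq_size; first exact: undup_uniq.
  move=> col /colors_mem [a [a' [Haa' <-]]].
  have [aA a'A aa' Hno] := consec1 (enum_sorted A) Haa'.
  rewrite !mem_enum in aA a'A.
  have /imsetP [x0 x0S hx0] := aA.
  have /imsetP [y0 y0S hy0] := a'A.
  have Hx0 : x0 \in Sa a by rewrite inE x0S hx0 eqxx.
  have Hy0 : y0 \in Sa a' by rewrite inE y0S hy0 eqxx.
  have [x xS xmax] := @arg_maxnP _ x0 (fun x => x \in Sa a) val Hx0.
  have [y yS ymin] := @arg_minnP _ y0 (fun x => x \in Sa a') val Hy0.
  move: xS yS; rewrite !inE => /andP [xS /eqP hx] /andP [yS /eqP hy].
  have -> : c1 (a, a') = prodc c1 c2 (x, y).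
    rewrite ffunE /= hx hy ifT //; apply/eqP => E; by rewrite E ltnn in aa'.
  apply: mem_colors; apply: consec2; rewrite ?mem_enum //; first exact: enum_sorted.
    by apply: hi_lt; rewrite hx hy.
  move=> z; rewrite mem_enum => zS; apply/negP => /andP [xz zy].
  have h1 := hi_mono (ltnW xz); have h2 := hi_mono (ltnW zy).
  rewrite hx hy in h1 h2.
  case: (eqVneq (hi z) a) => [hz|hz].
    have := xmax z; rewrite inE zS hz eqxx /= => /(_ isT); by rewrite leqNgt xz.
  case: (eqVneq (hi z) a') => [hz'|hz'].
    have := ymin z; rewrite inE zS hz' eqxx /= => /(_ isT); by rewrite leqNgt zy.
  have := Hno (hi z); rewrite mem_enum imset_f // => /(_ isT); apply/negP; rewrite negbK.
  apply/andP; split.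
    by rewrite ltn_neqAle h1 andbT; apply/eqP => /val_inj E; rewrite E eqxx in hz.
  by rewrite ltn_neqAle h2 andbT; apply/eqP => /val_inj E; rewrite E eqxx in hz'.
have HB a : #|Sa a| <= fK r c2.
  have inj : {in Sa a &, injective lo}.
    move=> x y; rewrite !inE => /andP [_ /eqP hx] /andP [_ /eqP hy] l.
    by apply: hilo_inj => //; rewrite hx hy.
  rewrite -(card_in_imset inj); apply: fK_ge.
  apply: leq_trans HS; apply: uniq_leq_size; first exact: undup_uniq.
  move=> col /colors_mem [b [b' [Hbb' <-]]].
  have [bB b'B bb' Hno] := consec1 (enum_sorted _) Hbb'.
  rewrite !mem_enum in bB b'B.
  have /imsetP [x xS Eb] := bB.
  have /imsetP [y yS Eb'] := b'B.
  subst b b'.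
  move: xS yS; rewrite !inE => /andP [xS /eqP hx] /andP [yS /eqP hy].
  have hxy : hi x = hi y by rewrite hx hy.
  have -> : c2 (lo x, lo y) = prodc c1 c2 (x, y) by rewrite ffunE /= hxy eqxx.
  apply: mem_colors; apply: consec2; rewrite ?mem_enum //; first exact: enum_sorted.
    by rewrite (hi_eq hxy).
  move=> z; rewrite mem_enum => zS; apply/negP => /andP [xz zy].
  have h1 := hi_mono (ltnW xz); have h2 := hi_mono (ltnW zy).
  have hz : hi z = a.
    apply: val_inj; apply/eqP; rewrite eqn_leq; rewrite -hx; rewrite h1 andbT.
    by rewrite hx -hy.
  have := Hno (lo z); rewrite mem_enum imset_f ?inE ?zS ?hz ?eqxx // => /(_ isT); apply/negP.
  by rewrite -!hi_eq ?xz ?zy // ?hz ?hx ?hy.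
have -> : #|S| = \sum_(a : 'I_n.+1) #|Sa a|.
  rewrite -sum1_card (partition_big hi xpredT) //=; apply: eq_bigr => a _.
  rewrite -sum1_card; apply: eq_bigl => x; by rewrite inE.
rewrite (bigID (mem A)) /= [X in _ + X]big1 ?addn0; last first.
  move=> a aA; apply/eqP; rewrite cards_eq0; apply/eqP/setP => x; rewrite !inE.
  apply/negP => /andP [xS /eqP hx]; move: aA; by rewrite -hx imset_f.
apply: (@leq_trans (\sum_(a in A) fK r c2)); first exact: leq_sum.
rewrite sum_nat_const leq_mul2r; apply/orP; right; exact: fK_ge.
Qed.
End Prod.

Lemma fqr_le q r N (c : coloring q N) : fqr q r N <= fK r c.
Proof.
rewrite /fqr.
have : c \in index_enum (coloring q N) by rewrite mem_index_enum.
elim: (index_enum _) => [|d s IH] //; rewrite inE big_cons => /orP [/eqP <-|cs].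
  exact: geq_minl.
by rewrite geq_min IH ?orbT.
Qed.

Lemma fK_leN q r N (c : coloring q N) : fK r c <= N.
Proof. apply: fK_le => S _; rewrite -[X in _ <= X]card_ord; exact: max_card. Qed.

Lemma fqr_leN q r N : fqr q r N <= N.
Proof.
rewrite /fqr; elim/big_ind: _ => //.
- by move=> x y hx hy; rewrite geq_min hx.
- move=> c _; exact: fK_leN.
Qed.

Lemma fqr_ex q r N : 0 < q -> exists c : coloring q N, fK r c <= fqr q r N.
Proof.
move=> q0; rewrite /fqr; elim/big_ind: _.
- exists [ffun _ => Ordinal q0]; exact: fK_leN.
- move=> x y [c hc] [d hd]; case: (leqP x y) => h.
    by exists c.
  by exists d.
- by move=> c _; exists c.
Qed.

Lemma fqr_mul q r n m : 0 < q -> fqr q r (n.+1 * m.+1) <= fqr q r n.+1 * fqr q r m.+1.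
Proof.
move=> q0; have [c1 h1] := fqr_ex r n.+1 q0; have [c2 h2] := fqr_ex r m.+1 q0.
apply: leq_trans (fqr_le r (prodc c1 c2)) _.
apply: leq_trans (fK_prod r c1 c2) _; exact: leq_mul.
Qed.

Lemma fqr_pow q r N k : 0 < q -> 0 < N -> fqr q r (expn N k) <= expn (fqr q r N) k.
Proof.
move=> q0 N0; elim: k => [|k IH]; first by rewrite !expn0; exact: fqr_leN.
rewrite expnSr [X in _ <= X]expnSr.
have : 0 < expn N k by rewrite expn_gt0 N0.
move: IH; set P := expn N k; case: P => // p IH _; case: N N0 IH => // n _ IH.
apply: leq_trans (fqr_mul r p n q0) _; exact: leq_mul.
Qed.

Lemma ln_le' x y : (0 < x)%R -> (x <= y)%R -> (ln x <= ln y)%R.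
Proof.
intros Hx Hxy; destruct (Rle_lt_or_eq_dec x y Hxy) as [h|h].
- left; apply ln_increasing; auto.
- right; subst; reflexivity.
Qed.

Lemma exp_le' x y : (x <= y)%R -> (exp x <= exp y)%R.
Proof.
intros Hxy; destruct (Rle_lt_or_eq_dec x y Hxy) as [h|h].
- left; apply exp_increasing; auto.
- right; subst; reflexivity.
Qed.

Lemma powE (a k : nat) : Nat.pow a k = expn a k.
Proof. elim: k => [|k IH] //=; by rewrite expnS IH. Qed.

Theorem proposition3p6 (q r : nat) (alpha : R) (eps : nat -> R) :
  (1 <= r)%N -> (r < q)%N ->
  Un_cv eps 0%R ->
  (forall N : nat, (0 < N)%N -> (Rpower (INR N) (alpha - eps N) <= INR (fqr q r N))%R) ->
  forall N : nat, (0 < N)%N -> (Rpower (INR N) alpha <= INR (fqr q r N))%R.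
Proof.
move=> r1 rq Hcv H N N0.
have q0 : (0 < q)%N by apply: leq_ltn_trans rq.
set f := INR (fqr q r N).
have fpos : (0 < f)%R.
  have := H N N0; rewrite /Rpower -/f.
  have := exp_pos ((alpha - eps N) * ln (INR N)); lra.
have INpos : (0 < INR N)%R by apply: lt_0_INR; apply/ltP.
have key : forall k, (0 < k) -> ((alpha - eps (expn N k)) * ln (INR N) <= ln f)%R.
  move=> k k0.
  have Nk0 : (0 < expn N k) by rewrite expn_gt0 N0.
  have h1 := H _ Nk0.
  have h2 : (INR (fqr q r (expn N k)) <= f ^ k)%R.
    rewrite /f -pow_INR; apply: le_INR; apply/leP; rewrite powE; exact: fqr_pow.
  have h3 : (Rpower (INR (expn N k)) (alpha - eps (expn N k)) <= f ^ k)%R by lra.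
  have E : INR (expn N k) = (INR N ^ k)%R by rewrite -powE pow_INR.
  rewrite /Rpower E in h3.
  have h4 := ln_le' (exp_pos _) h3.
  rewrite ln_exp ln_pow // ln_pow // in h4.
  have kpos : (0 < INR k)%R by apply: lt_0_INR; apply/ltP.
  nra.
case: (ltngtP N 1) => [|N1|N1].
- by rewrite ltnNge N0.
- have lnN : (0 < ln (INR N))%R.
    rewrite -ln_1; apply: ln_increasing; first lra.
    by change 1%R with (INR 1); apply: lt_INR; apply/ltP.
  rewrite /Rpower -(exp_ln f fpos); apply: exp_le'.
  apply: Rnot_lt_le => hlt.
  set d := ((alpha * ln (INR N) - ln f) / ln (INR N))%R.
  have dpos : (0 < d)%R.
    rewrite /d; apply: Rdiv_lt_0_compat => //; lra.
  have dE : (d * ln (INR N) = alpha * ln (INR N) - ln f)%R.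
    rewrite /d; field; lra.
  have [K HK] := Hcv d dpos.
  have hk : (K <= expn N K.+1).
    apply: ltnW; apply: leq_trans (ltn_expl K.+1 N1); exact: leqnSn.
  have := HK (expn N K.+1) (leP hk); rewrite /R_dist Rminus_0_r => /Rabs_def2 [he _].
  have := key K.+1 isT.
  nra.
- rewrite /f N1 /Rpower /= ln_1 Rmult_0_r exp_0.
  have := H 1 isT; rewrite /Rpower /= ln_1 Rmult_0_r exp_0; lra.
Qed.
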